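(* Consider one execution of the Modified NCB algorithm with inputs $k$ and $W$, where $\sqrt T\le W\le T$, and assume $968kS\le T$. On the event $E$, every arm $i$ that is pulled at least once in Phase 2 satisfies $$\mu_i\ge\mu^*-4c\sqrt{\frac{\mu^*\log T}{T_i-1}},$$ where $T_i$ is the total number of times arm $i$ is pulled in this execution.
   Context: Bandit setup: $k$ arms, arm $i$ a distribution on $[0,1]$ with mean $\mu_i$, $\mu^*:=\max_i\mu_i>0$. $\log$ is the natural logarithm; $c:=3$; $T$ is the overall horizon and $S:=\frac{c^2\log T}{\mu^*}$. Modified NCB algorithm (inputs $k$, window $W$): maintain counts $n_i$ and empirical means $\widehat\mu_i$ (both initially $0$), round index $t=1$. Phase 1: while $\max_i n_i\widehat\mu_i\le 420c^2\log W$ and $t\le W$, pull a uniformly random arm, update, increment $t$. Phase 2: while $t\le W$, pull an arm maximizing $\overline{\mathrm{NCB}}_i:=\widehat\mu_i+2c\sqrt{2\widehat\mu_i\log W/n_i}$ (ties arbitrary), update, increment $t$. Canonical model: a $k\times T$ table $(Y_{i,s})$ of independent entries with $Y_{i,s}$ distributed as arm $i$, the $s$-th pull of arm $i$ yielding $Y_{i,s}$; $\widehat\mu_{i,s}:=\frac1s\sum_{r=1}^sY_{i,r}$. The uniform choices in Phase 1 are $U_1,U_2,\dots$, independent uniform in $[k]$ (independent of the table). Events: $E_1$: for every integer $r$ with $128kS\le r\le T$ and every arm $i$, the number of $r'\le r$ with $U_{r'}=i$ is at least $\frac{r}{2k}$ and at most $\frac{3r}{2k}$. $E_2$: for every arm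 $i$ with $\mu_i>\frac{\mu^*}{64}$ and every integer $s$ with $64S\le s\le T$, $|\mu_i-\widehat\mu_{i,s}|\le c\sqrt{\frac{\mu_i\log T}{s}}$. $E_3$: for every arm $j$ with $\mu_j\le\frac{\mu^*}{64}$ and every integer $s$ with $64S\le s\le T$, $\widehat\mu_{j,s}<\frac{\mu^*}{32}$. $E:=E_1\cap E_2\cap E_3$. *)

(* Defs.v *)
From mathcomp Require Import all_boot all_order all_algebra.
From mathcomp Require Import reals exp.
Set Implicit Arguments. Unset Strict Implicit. Unset Printing Implicit Defensive.
Import Order.TTheory GRing.Theory Num.Theory.
Local Open Scope ring_scope.

Section NCB.
Variable R : realType.

Definition cc : R := 3.

Definition mustar (k : nat) (mu : 'I_k -> R) : R := \big[Num.max/0]_(i < k) mu i.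

Definition Sval (k : nat) (mu : 'I_k -> R) (T : nat) : R :=
  cc ^+ 2 * ln (T%:R) / mustar mu.

(* canonical model: hat mu_{i,s} = (1/s) sum_{r=1}^s Y_{i,r}  (0 when s = 0) *)
Definition hatmu (k : nat) (Y : 'I_k -> nat -> R) (i : 'I_k) (s : nat) : R :=
  (s%:R)^-1 * \sum_(1 <= r < s.+1) Y i r.

(* a t = arm pulled at round t (t = 1, 2, ...).
   cnt a i t = n_i at the beginning of round t = #{ r | 1 <= r < t, a r = i } *)
Definition cnt (k : nat) (a : nat -> 'I_k) (i : 'I_k) (t : nat) : nat :=
  \sum_(1 <= r < t) (a r == i).

Definition empmean (k : nat) (Y : 'I_k -> nat -> R) (a : nat -> 'I_k)
  (i : 'I_k) (t : nat) : R := hatmu Y i (cnt a i t).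

(* Phase 1 loop test at the start of round t (the t <= W part is separate) *)
Definition p1test (k : nat) (Y : 'I_k -> nat -> R) (a : nat -> 'I_k)
  (W t : nat) : bool :=
  \big[Num.max/0]_(i < k) ((cnt a i t)%:R * empmean Y a i t)
    <= 420 * cc ^+ 2 * ln (W%:R).

(* round t (1 <= t <= W) is executed in Phase 1 iff the Phase 1 loop test
   succeeded at the start of each of the rounds 1..t *)
Definition in_phase1 (k : nat) (Y : 'I_k -> nat -> R) (a : nat -> 'I_k)
  (W t : nat) : Prop :=
  forall r, (1 <= r <= t)%N -> p1test Y a W r.

(* overline NCB_i at the start of round t; with the convention x / 0 = 0 *)
Definition NCBbar (k : nat) (Y : 'I_k -> nat -> R) (a : nat -> 'I_k)
  (W : nat) (i : 'I_k) (t : nat) : R :=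
  empmean Y a i t +
  2 * cc * Num.sqrt (2 * empmean Y a i t * ln (W%:R) / (cnt a i t)%:R).

(* a is a possible execution of Modified NCB (inputs k, W), with Phase 1
   uniform choices U and reward table Y; ties in Phase 2 broken arbitrarily *)
Definition is_execution (k : nat) (Y : 'I_k -> nat -> R) (U : nat -> 'I_k)
  (W : nat) (a : nat -> 'I_k) : Prop :=
  forall t, (1 <= t <= W)%N ->
    (in_phase1 Y a W t -> a t = U t) /\
    (~ in_phase1 Y a W t -> forall j, NCBbar Y a W j t <= NCBbar Y a W (a t) t).

Definition Tpulls (k : nat) (a : nat -> 'I_k) (W : nat) (i : 'I_k) : nat :=
  cnt a i W.+1.

Definition pulled_in_phase2 (k : nat) (Y : 'I_k -> nat -> R) (a : nat -> 'I_k)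
  (W : nat) (i : 'I_k) : Prop :=
  exists t, [/\ (1 <= t <= W)%N, ~ in_phase1 Y a W t & a t = i].

Definition ucount (k : nat) (U : nat -> 'I_k) (i : 'I_k) (r : nat) : nat :=
  \sum_(1 <= r' < r.+1) (U r' == i).

Definition E1 (k : nat) (mu : 'I_k -> R) (T : nat) (U : nat -> 'I_k) : Prop :=
  forall (r : nat) (i : 'I_k),
    128 * k%:R * Sval mu T <= r%:R -> (r <= T)%N ->
    (r%:R : R) / (2 * k%:R) <= (ucount U i r)%:R /\
    ((ucount U i r)%:R : R) <= 3 * r%:R / (2 * k%:R).

Definition E2 (k : nat) (mu : 'I_k -> R) (T : nat) (Y : 'I_k -> nat -> R) : Prop :=
  forall (i : 'I_k) (s : nat), mustar mu / 64 < mu i ->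
    64 * Sval mu T <= s%:R -> (s <= T)%N ->
    `|mu i - hatmu Y i s| <= cc * Num.sqrt (mu i * ln (T%:R) / s%:R).

Definition E3 (k : nat) (mu : 'I_k -> R) (T : nat) (Y : 'I_k -> nat -> R) : Prop :=
  forall (j : 'I_k) (s : nat), mu j <= mustar mu / 64 ->
    64 * Sval mu T <= s%:R -> (s <= T)%N ->
    hatmu Y j s < mustar mu / 32.

Definition Ev (k : nat) (mu : 'I_k -> R) (T : nat) (U : nat -> 'I_k)
  (Y : 'I_k -> nat -> R) : Prop :=
  [/\ E1 mu T U, E2 mu T Y & E3 mu T Y].

End NCB.

(* Main.v *)
Require Import Defs.
From mathcomp Require Import all_boot all_order all_algebra.
From mathcomp Require Import reals exp.
From mathcomp Require Import ring lra zify.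
Import Order.TTheory GRing.Theory Num.Theory.
Local Open Scope ring_scope.
Section H. Variable R : realType.
Lemma cnt_mono k (a : nat -> 'I_k) i t1 t2 : (t1 <= t2)%N -> (cnt a i t1 <= cnt a i t2)%N.
Proof.
rewrite /cnt => h; case: t1 h => [|t1] h; first by rewrite big_geq.
by rewrite [X in (_ <= X)%N](big_cat_nat _ (n := t1.+1)) //= leq_addr.
Qed.
Lemma cnt_le k (a : nat -> 'I_k) i t : (cnt a i t <= t.-1)%N.
Proof.
rewrite /cnt -[t.-1]muln1 -subn1 -sum_nat_const_nat; apply: leq_sum => r _; exact: leq_b1.
Qed.
Lemma ucount_mono k (U : nat -> 'I_k) i t1 t2 : (t1 <= t2)%N -> (ucount U i t1 <= ucount U i t2)%N.
Proof.
rewrite /ucount => h.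
by rewrite [X in (_ <= X)%N](big_cat_nat _ (n := t1.+1)) //= leq_addr.
Qed.
Lemma ucount_le k (U : nat -> 'I_k) i t : (ucount U i t <= t)%N.
Proof.
rewrite /ucount; apply: (@leq_trans (\sum_(1 <= r < t.+1) 1)%N).
  by apply: leq_sum => r _; exact: leq_b1.
by rewrite sum_nat_const_nat muln1 subn1.
Qed.
Lemma hatmu_sum k (Y : 'I_k -> nat -> R) i s :
  s%:R * hatmu Y i s = \sum_(1 <= r < s.+1) Y i r.
Proof.
rewrite /hatmu; case: s => [|s]; first by rewrite big_geq // mul0r.
by rewrite mulrA mulfV ?mul1r // pnatr_eq0.
Qed.
Lemma sumY_mono k (Y : 'I_k -> nat -> R) i s1 s2 : (forall r, 0 <= Y i r) -> (s1 <= s2)%N ->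
  \sum_(1 <= r < s1.+1) Y i r <= \sum_(1 <= r < s2.+1) Y i r.
Proof.
move=> hY h.
rewrite (big_cat_nat _ (n := s1.+1) (m := 1%N) (p := s2.+1)) //=.
by rewrite lerDl sumr_ge0.
Qed.
Lemma hatmu_ge0 k (Y : 'I_k -> nat -> R) i s : (forall r, 0 <= Y i r) -> 0 <= hatmu Y i s.
Proof. by move=> hY; rewrite /hatmu mulr_ge0 ?invr_ge0 ?sumr_ge0. Qed.
Implicit Types (x y v b : R).
Lemma sqrt_leB (v b : R) : 0 <= b -> v <= b ^+ 2 -> Num.sqrt v <= b.
Proof.
move=> hb hv; have [hv0|hv0] := leP 0 v.
  by rewrite -(ger0_norm hb) -sqrtr_sqr ler_wsqrtr.
by rewrite ltr0_sqrtr.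
Qed.
Lemma sqrt_geB (v b : R) : 0 <= b -> b ^+ 2 <= v -> b <= Num.sqrt v.
Proof.
by move=> hb hv; rewrite -(ger0_norm hb) -sqrtr_sqr ler_wsqrtr.
Qed.
Lemma sqrtM3 (a L n : R) : 0 <= a -> Num.sqrt (a * L / n) = Num.sqrt a * Num.sqrt (L / n).
Proof. by move=> ha; rewrite -mulrA sqrtrM. Qed.

Lemma zbound (mu L n : R) : 0 < mu -> 0 < L -> 64 * (3 ^+ 2 * L / mu) <= n ->
  0 < n /\ 24 * Num.sqrt (L / n) <= Num.sqrt mu.
Proof.
move=> hmu hL; have hmu0 : 0 <= mu by exact: ltW. have hL0 : 0 <= L by exact: ltW. move=> hn.
have hn0 : 0 < n.
  apply: lt_le_trans hn; apply: mulr_gt0 => //; apply: divr_gt0 => //; nra.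
have h1 : 576 * L <= mu * n.
  have -> : 576 * L = mu * (64 * (3 ^+ 2 * L / mu)) by field; lra.
  by rewrite ler_wpM2l // ltW.
split=> //. have hn00 : 0 <= n by exact: ltW.
apply: sqrt_geB; first exact: mulr_ge0 (sqrtr_ge0 _).
rewrite exprMn sqr_sqrtr ?divr_ge0 ?hn00 ?hL0 //.
rewrite mulrA ler_pdivrMr //; nra.
Qed.

Lemma lemA (mu L lw h n : R) : 0 < mu -> 0 < L -> 0 <= h -> L <= 2 * lw ->
  64 * (3 ^+ 2 * L / mu) <= n -> `|mu - h| <= 3 * Num.sqrt (mu * L / n) ->
  mu <= h + 2 * 3 * Num.sqrt (2 * h * lw / n).
Proof.
move=> hmu hL; have hmu0 : 0 <= mu by exact: ltW. have hL0 : 0 <= L by exact: ltW. move=> hh hlw hn hd.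
have [hn0 hz] := @zbound mu L n hmu hL hn. have hn00 : 0 <= n by exact: ltW.
rewrite sqrtM3 ?hmu0 // in hd.
set y := Num.sqrt mu in hz hd; set z := Num.sqrt (L / n) in hz hd.
have hy : y ^+ 2 = mu by rewrite sqr_sqrtr.
have hz0 : 0 <= z by exact: sqrtr_ge0.
have hy0 : 0 <= y by exact: sqrtr_ge0.
set x := Num.sqrt h.
have hx : x ^+ 2 = h by rewrite sqr_sqrtr.
have hx0 : 0 <= x by exact: sqrtr_ge0.
have hs : x * z <= Num.sqrt (2 * h * lw / n).
  apply: sqrt_geB; first exact: mulr_ge0.
  rewrite exprMn hx sqr_sqrtr ?divr_ge0 ?hn00 ?hL0 //.
  rewrite mulrA ler_pM2r ?invr_gt0 //; nra.
have hd' : mu - h <= 3 * (y * z) by apply: le_trans hd; exact: ler_norm.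
have hyx : y <= 2 * x by nra.
nra.
Qed.

Lemma lemB (mu L lw h n : R) : 0 < mu -> 0 < L -> 0 <= h -> h < mu / 32 ->
  lw <= L -> 64 * (3 ^+ 2 * L / mu) <= n ->
  h + 2 * 3 * Num.sqrt (2 * h * lw / n) < mu.
Proof.
move=> hmu hL; have hmu0 : 0 <= mu by exact: ltW. have hL0 : 0 <= L by exact: ltW. move=> hh hhm hlw hn.
have [hn0 hz] := @zbound mu L n hmu hL hn. have hn00 : 0 <= n by exact: ltW.
set y := Num.sqrt mu in hz; set z := Num.sqrt (L / n) in hz.
have hy : y ^+ 2 = mu by rewrite sqr_sqrtr.
have hz0 : 0 <= z by exact: sqrtr_ge0.
have hy0 : 0 <= y by exact: sqrtr_ge0.
have hs : Num.sqrt (2 * h * lw / n) <= y / 4 * z.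
  apply: sqrt_leB; first by apply: mulr_ge0 => //; lra.
  rewrite exprMn sqr_sqrtr ?divr_ge0 ?hn00 ?hL0 //.
  have hL' : lw / n <= L / n by rewrite ler_pM2r ?invr_gt0.
  rewrite -mulrA.
  apply: (@le_trans _ _ (2 * h * (L / n))).
    by rewrite ler_wpM2l //; lra.
  rewrite ler_wpM2r ?divr_ge0 ?hn00 ?hL0 //; nra.
nra.
Qed.

Lemma lemC (mu L lw h n mi : R) : 0 < mu -> 0 < L -> 0 <= h -> 0 <= mi -> mi <= mu ->
  0 <= lw -> lw <= L -> 64 * (3 ^+ 2 * L / mu) <= n ->
  `|mi - h| <= 3 * Num.sqrt (mi * L / n) ->
  mu <= h + 2 * 3 * Num.sqrt (2 * h * lw / n) ->
  mu - 4 * 3 * Num.sqrt (mu * L / n) <= mi.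
Proof.
move=> hmu hL; have hmu0 : 0 <= mu by exact: ltW. have hL0 : 0 <= L by exact: ltW. move=> hh hmi hmim hlw0 hlw hn hd hncb.
have [hn0 hz] := @zbound mu L n hmu hL hn. have hn00 : 0 <= n by exact: ltW.
rewrite sqrtM3 // in hd; rewrite sqrtM3 ?hmu0 //.
set y := Num.sqrt mu in hz *; set z := Num.sqrt (L / n) in hz hd *.
have hy : y ^+ 2 = mu by rewrite sqr_sqrtr.
have hz0 : 0 <= z by exact: sqrtr_ge0.
have hy0 : 0 <= y by exact: sqrtr_ge0.
set u := Num.sqrt mi in hd.
have hu : u ^+ 2 = mi by rewrite sqr_sqrtr.
have hu0 : 0 <= u by exact: sqrtr_ge0.
have huy : u <= y by rewrite ler_wsqrtr.
have hd' : h - mi <= 3 * (u * z) by apply: le_trans hd; rewrite distrC; exact: ler_norm.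
have hh2 : h <= 9 / 8 * y ^+ 2 by nra.
have hs : Num.sqrt (2 * h * lw / n) <= 3 / 2 * y * z.
  apply: sqrt_leB; first by apply: mulr_ge0 => //; nra.
  rewrite exprMn sqr_sqrtr ?divr_ge0 ?hn00 ?hL0 //.
  have hL' : lw / n <= L / n by rewrite ler_pM2r ?invr_gt0.
  rewrite -mulrA.
  apply: (@le_trans _ _ (2 * h * (L / n))).
    by rewrite ler_wpM2l //; lra.
  rewrite ler_wpM2r ?divr_ge0 ?hn00 ?hL0 //; nra.
nra.
Qed.
Lemma lemD (mu L Sv Np h mj : R) :
  0 < mu -> mu <= 1 -> 1/2 <= L -> Sv = 3 ^+ 2 * L / mu -> 64 * Sv <= Np ->
  Np <= 192 * Sv + 3/2 -> 0 <= h ->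
  ((0 <= mj /\ mj <= mu /\ `|mj - h| <= 3 * Num.sqrt (mj * L / Np)) \/ h < mu / 32) ->
  Np * h <= 1890 * L.
Proof.
move=> hmu hmu1 hL hS hN1 hN2 hh hc.
have hSm : Sv * mu = 9 * L by rewrite hS; field; lra.
have hS9 : 9 * L <= Sv by nra.
have hNp : 0 < Np by nra.
have hNp0 : 0 <= Np by exact: ltW.
have hL0 : 0 <= L by lra.
case: hc => [[hmj0 [hmj hd]]|h32]; last first.
  have : Np * h <= Np * (mu / 32) by rewrite ler_wpM2l // ltW.
  nra.
set v := Num.sqrt (mj * L / Np) in hd.
have hv : v ^+ 2 = mj * L / Np by rewrite sqr_sqrtr // divr_ge0 // mulr_ge0.
have hv0 : 0 <= v by exact: sqrtr_ge0.
have hw : (Np * v) ^+ 2 = Np * mj * L.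
  by rewrite exprMn hv; field; lra.
have hw2 : (Np * v) ^+ 2 <= (48 * L) ^+ 2.
  rewrite hw.
  have h1 : Np * mj <= Np * mu by rewrite ler_wpM2l.
  have h2 : Np <= 256 * Sv by lra.
  have h3 : Np * mu <= 256 * Sv * mu by rewrite ler_wpM2r // ltW.
  have : Np * mj * L <= 256 * Sv * mu * L by rewrite ler_wpM2r //; lra.
  nra.
have hw3 : Np * v <= 48 * L.
  have hw0 : 0 <= Np * v by exact: mulr_ge0.
  nra.
have hd' : h - mj <= 3 * v by apply: le_trans hd; rewrite distrC; exact: ler_norm.
nra.
Qed.
End H.
Arguments cnt_le {k}.
Arguments cnt_mono {k}.
Arguments ucount_mono {k}.
Arguments ucount_le {k}.
Arguments lemA {R mu L lw h n}.
Arguments lemB {R mu L lw h n}.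
Arguments lemC {R mu L lw h n mi}.
Arguments lemD {R mu L Sv Np h mj}.
Arguments hatmu_ge0 {R k Y i s}.
Arguments hatmu_sum {R k} Y i s.
Arguments sumY_mono {R k Y i s1 s2}.

Theorem lemma11 (R : realType) (k : nat) (mu : 'I_k -> R) (T W : nat)
  (U : nat -> 'I_k) (Y : 'I_k -> nat -> R) (a : nat -> 'I_k) :
  (forall i, 0 <= mu i <= 1) ->
  (forall i s, 0 <= Y i s <= 1) ->
  0 < mustar mu ->
  Num.sqrt (T%:R : R) <= W%:R -> (W <= T)%N ->
  968 * k%:R * Sval mu T <= T%:R ->
  is_execution Y U W a ->
  Ev mu T U Y ->
  forall i : 'I_k, pulled_in_phase2 Y a W i ->
    (1 < Tpulls a W i)%N ->
    mustar mu - 4 * cc R * Num.sqrt (mustar mu * ln (T%:R) / ((Tpulls a W i).-1)%:R)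
      <= mu i.
Proof.
move=> hmu hY hmus hWT hWT' h968 hexe [hE1 hE2 hE3] i [t0 [ht0 hnp0 hat0]] hTp.
have hY0 : forall j r, 0 <= Y j r by move=> j r; case/andP: (hY j r).
have hmu0 : forall j, 0 <= mu j by move=> j; case/andP: (hmu j).
set M := mustar mu in hmus *.
have mu_le : forall j, mu j <= M by move=> j; exact: le_bigmax.
have hM1 : M <= 1 by apply: bigmax_le => // j _; case/andP: (hmu j).
have [istar histar] : exists j, mu j = M.
  exists [arg max_(j > i) mu j]%O; rewrite /M /mustar.
  by rewrite (bigmax_eq_arg _ i) // => j _; exact: hmu0.
have hTW : (Tpulls a W i <= W)%N by exact: cnt_le.
have hW2 : (2 <= W)%N by exact: leq_trans hTW.
have hT2 : (2 <= T)%N by exact: leq_trans hWT'.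
set L := ln (T%:R : R).
set lw := ln (W%:R : R).
have hTr : (2:R) <= T%:R by rewrite (ler_nat R 2 T).
have hWr : (2:R) <= W%:R by rewrite (ler_nat R 2 W).
have hL : 1/2 <= L.
  have hTp0 : (T%:R : R) \in Num.pos by rewrite posrE; lra.
  have hx : T%:R^-1 * T%:R = 1 :> R by rewrite mulVf //; lra.
  have hx0 : 0 < (T%:R : R)^-1 by rewrite invr_gt0; lra.
  have := @le_ln1Dx R (T%:R^-1 - 1).
  have -> : 1 + (T%:R^-1 - 1) = (T%:R : R)^-1 by ring.
  rewrite lnV // => /(_ ltac:(lra)).
  rewrite /L; nra.
have hlwL : lw <= L.
  by rewrite /lw /L ler_ln ?posrE ?ler_nat //; lra.
have hlw2 : L <= 2 * lw.
  have hTW2 : (T%:R : R) <= W%:R ^+ 2.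
    have hs0 := sqrtr_ge0 (T%:R : R).
    have hs2 : Num.sqrt (T%:R : R) ^+ 2 = T%:R by rewrite sqr_sqrtr.
    nra.
  have := hTW2; rewrite -(ler_ln (x := T%:R)) ?posrE; last 2 first.
  - lra.
  - apply: exprn_gt0; lra.
  by rewrite lnXn -/lw -/L ?mulr2n; [lra|lra].
have hlw0 : 0 <= lw by apply: ln_ge0; lra.
have hS : Sval mu T = 3 ^+ 2 * L / M by [].
set S := Sval mu T in h968 hE1 hE2 hE3 hS.
have hk : (0 < k)%N by exact: leq_ltn_trans (leq0n i) (ltn_ord i).
have hkr : (1:R) <= k%:R by rewrite (ler_nat R 1 k).
have hLpos : 0 < L by lra.
have hS9 : 9 * L <= S by rewrite hS ler_pdivlMr //; nra.
case/andP: ht0 => ht01 ht0W.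
have exP : exists t, (t0 <= t <= W)%N && (a t == i) by exists t0; rewrite leqnn ht0W hat0 eqxx.
have bnd : forall t, (t0 <= t <= W)%N && (a t == i) -> (t <= W)%N by move=> t /andP[/andP[]].
case: (ex_maxnP exP bnd) => tl /andP[/andP[htl0 htlW] /eqP hatl] hmax.
have htl1 : (1 <= tl)%N by exact: leq_trans htl0.
have hnpl : ~ in_phase1 Y a W tl.
  by move=> h; apply: hnp0 => r /andP[h1 h2]; apply: h; rewrite h1 (leq_trans h2 htl0).
have hTl : Tpulls a W i = (cnt a i tl).+1.
  rewrite /Tpulls /cnt (big_cat_nat _ (n := tl)) //=; last by rewrite ltnW // ltnS.
  rewrite [X in (_ + X)%N](big_cat_nat _ (n := tl.+1)) //= big_nat1 hatl eqxx.
  suff -> : (\sum_(tl.+1 <= t < W.+1) (a t == i) = 0)%N by rewrite addn0 addn1.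
  rewrite big_nat_cond big1 // => t /andP[/andP[h1 h2] _]; apply/eqP; rewrite eqb0; apply/negP => /eqP hat.
  have := hmax t; rewrite (leq_trans htl0 (ltnW h1)) -ltnS h2 hat eqxx /= => /(_ isT).
  by rewrite leqNgt h1.
have exr : exists r, (1 <= r <= tl)%N && ~~ p1test Y a W r.
  case: (boolP [exists r : 'I_tl.+1, (1 <= r)%N && ~~ p1test Y a W r]) => [/existsP [r hr]|hno].
    by exists r; case/andP: hr => -> ->; rewrite -ltnS ltn_ord.
  exfalso; apply: hnpl => r /andP[h1 h2]; apply/negPn/negP => hp.
  move/existsPn: hno => /(_ (Ordinal (h2 : (r < tl.+1)%N))) /=.
  by rewrite h1 hp.
case: (ex_minnP exr) => r /andP[/andP[hr1 hrtl] hpr] hmin.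
have hphase1 : forall t', (1 <= t')%N -> (t' < r)%N -> a t' = U t'.
  move=> t' h1 h2.
  have [hA _] := hexe t' ltac:(rewrite h1 /=; exact: leq_trans (ltnW h2) (leq_trans hrtl htlW)).
  apply: hA => r' /andP[h3 h4]; apply/negPn/negP => hp.
  have := hmin r'; rewrite h3 hp (leq_trans h4 (leq_trans (ltnW h2) hrtl)) /= => /(_ isT).
  by move=> hh; move: (leq_ltn_trans hh (leq_ltn_trans h4 h2)); rewrite ltnn.
have hcntU : forall j, cnt a j r = ucount U j r.-1.
  move=> j; rewrite /cnt /ucount prednK //; apply: eq_big_nat => t' /andP[h1 h2].
  by rewrite hphase1.
have hrT : (r.-1 <= T)%N by apply: leq_trans (leq_pred r) (leq_trans hrtl (leq_trans htlW hWT')).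
have hrbig : 128 * k%:R * S <= (r.-1)%:R.
  rewrite leNgt; apply/negP => hm.
  set B := 420 * cc R ^+ 2 * lw.
  have hB0 : 0 <= B by rewrite /B /cc; nra.
  have [jj hjj] : exists jj, B < (cnt a jj r)%:R * empmean Y a jj r.
    case: (boolP [exists jj, B < (cnt a jj r)%:R * empmean Y a jj r]) => [/existsP[jj h]|hno].
      by exists jj.
    exfalso; move/negP: hpr; apply; rewrite /p1test -/B.
    apply: bigmax_le => // j _; move/existsPn: hno => /(_ j).
    by rewrite -leNgt.
  have hkS : 1 <= k%:R * S by nra.
  have hx0 : 0 <= 128 * k%:R * S by nra.
  set Mn := (Num.truncn (128 * k%:R * S)).+1.
  have hMn1 : 128 * k%:R * S < Mn%:R by exact: truncnS_gt.
  have hMn2 : Mn%:R <= 128 * k%:R * S + 1.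
    rewrite /Mn -natr1 lerD2r; by rewrite truncn_le.
  have hmM : (r.-1 < Mn)%N by rewrite -(ltr_nat R); lra.
  have hMT : (Mn <= T)%N by rewrite -(ler_nat R); nra.
  have [hlo hhi] := hE1 Mn jj (ltW hMn1) hMT.
  set Np := ucount U jj Mn in hlo hhi.
  have hk0 : (0:R) < k%:R by lra.
  have hNp1 : 64 * S <= Np%:R.
    move: hlo; rewrite ler_pdivrMr; last by lra.
    move=> hlo; have : k%:R * (64 * S) <= k%:R * Np%:R by nra.
    by rewrite ler_pM2l.
  have hNp2 : Np%:R <= 192 * S + 3/2.
    move: hhi; rewrite ler_pdivlMr; last by lra.
    move=> hhi; have : k%:R * Np%:R <= k%:R * (192 * S + 3/2) by nra.
    by rewrite ler_pM2l.
  have hNNp : (cnt a jj r <= Np)%N by rewrite hcntU; apply: ucount_mono; exact: ltnW.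
  have hNpT : (Np <= T)%N by exact: leq_trans (ucount_le U jj Mn) hMT.
  have hFj : (cnt a jj r)%:R * empmean Y a jj r <= Np%:R * hatmu Y jj Np.
    by rewrite /empmean !hatmu_sum; apply: sumY_mono => // s; exact: hY0.
  have hD : Np%:R * hatmu Y jj Np <= 1890 * L.
    apply: (lemD hmus hM1 hL hS hNp1 hNp2 (hatmu_ge0 (hY0 jj))).
    case: (lerP (mu jj) (M / 64)) => hmj.
      by right; exact: hE3 jj Np hmj hNp1 hNpT.
    left; split; first exact: hmu0.
    split; first exact: mu_le.
    by have := hE2 jj Np hmj hNp1 hNpT; rewrite /cc.
  move: hjj; rewrite /B /cc; lra.
have hbig : forall j, 64 * S <= (cnt a j tl)%:R.
  move=> j; have [hlo _] := hE1 r.-1 j hrbig hrT.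
  apply: (@le_trans _ _ (cnt a j r)%:R); last by rewrite ler_nat cnt_mono.
  rewrite hcntU; apply: le_trans hlo.
  rewrite ler_pdivlMr; last by lra.
  nra.
have hcT : forall j, (cnt a j tl <= T)%N.
  move=> j; apply: (leq_trans (cnt_le a j tl)); apply: (leq_trans (leq_pred tl)).
  exact: leq_trans htlW hWT'.
have [_ hB] := hexe tl ltac:(by rewrite htl1 htlW).
have hcmp := hB hnpl istar; rewrite hatl /NCBbar /empmean /cc in hcmp.
have hsM : 64 * (3 ^+ 2 * L / M) <= (cnt a istar tl)%:R by rewrite -hS; exact: hbig.
have hA := lemA hmus hLpos (hatmu_ge0 (hY0 istar)) hlw2 hsM.
have hd : `|M - hatmu Y istar (cnt a istar tl)| <= 3 * Num.sqrt (M * L / (cnt a istar tl)%:R).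
  have h64 : M / 64 < mu istar by rewrite histar; lra.
  by have := hE2 istar (cnt a istar tl) h64 (hbig istar) (hcT istar); rewrite histar /cc.
have {}hA := hA _ hd.
rewrite hTl /= /cc.
have hsi : 64 * (3 ^+ 2 * L / M) <= (cnt a i tl)%:R by rewrite -hS; exact: hbig.
case: (lerP (mu i) (M / 64)) => hmi.
  have h32 := hE3 i (cnt a i tl) hmi (hbig i) (hcT i).
  have := lemB hmus hLpos (hatmu_ge0 (hY0 i)) h32 hlwL hsi.
  move=> hh; exfalso; have := le_trans hA hcmp; rewrite leNgt hh //.
have hdi := hE2 i (cnt a i tl) hmi (hbig i) (hcT i); rewrite /cc in hdi.
exact: lemC hmus hLpos (hatmu_ge0 (hY0 i)) (hmu0 i) (mu_le i) hlw0 hlwL hsi hdi (le_trans hA hcmp).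
Qed.
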